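(* Let $Q$ be an admissible orientation of $\tilde{A}_n$ and $I$ a two-sided algebra ideal of $\Bbbk Q$. Then exactly one of the following holds: (a) $I$ is a linearized semigroup ideal; (b) $k=1$ and $I=\Bbbk(\omega+a\upsilon)$, where $\omega$ and $\upsilon$ are the two different maximal paths of $Q$ and $a\in\Bbbk\setminus\{0\}$.
   Context: $\Bbbk$ is an algebraically closed field. An admissible orientation of $\tilde A_n$ is a finite quiver $Q$ with $n$ vertices whose underlying undirected graph is a cycle, having no oriented cycle and at least one source; $k\ge1$ denotes the number of sources (= number of sinks). Paths include trivial paths $\varepsilon_x$; products of paths in $\Bbbk Q$ are concatenations when defined and $0$ otherwise. $\omega\le_J\upsilon$ means $\upsilon=\alpha\omega\beta$ for paths $\alpha,\beta$; maximal paths are the $\le_J$-maximal paths. A linearized semigroup ideal is an ideal of $\Bbbk Q$ spanned by a set $X$ of paths such that $\alpha\omega\beta\in X$ whenever $\omega\in X$ and $\alpha\omega\beta$ is a defined path. *)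

(* Defs.v *)
From HB Require Import structures.
From mathcomp Require Import all_boot all_order all_algebra.
Set Implicit Arguments. Unset Strict Implicit. Unset Printing Implicit Defensive.
Import GRing.Theory.
Local Open Scope ring_scope.

(* A quiver whose underlying graph is a cycle with n vertices, up to
   isomorphism: vertices 'I_n, arrows 'I_n; arrow a joins a and ordS a
   (= a+1 mod n) and is oriented a -> a+1 if o a, and a+1 -> a otherwise. *)
Section CycleQuiver.
Variables (n : nat) (o : 'I_n -> bool).

Definition asrc (a : 'I_n) : 'I_n := if o a then a else ordS a.
Definition atgt (a : 'I_n) : 'I_n := if o a then ordS a else a.

(* A (raw) path is a starting vertex with a sequence of arrows,
   written left to right in order of traversal. *)
Definition rpath := ('I_n * seq 'I_n)%type.

Fixpoint validp (x : 'I_n) (s : seq 'I_n) : bool :=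
  if s is a :: s' then (asrc a == x) && validp (atgt a) s' else true.

Fixpoint endp (x : 'I_n) (s : seq 'I_n) : 'I_n :=
  if s is a :: s' then endp (atgt a) s' else x.

Definition is_path (p : rpath) : bool := validp p.1 p.2.
Definition psrc (p : rpath) : 'I_n := p.1.
Definition ptgt (p : rpath) : 'I_n := endp p.1 p.2.

(* concatenation (only meaningful when ptgt p = psrc q) *)
Definition pcat (p q : rpath) : rpath := (p.1, p.2 ++ q.2).

Definition acyclic : Prop :=
  forall p : rpath, is_path p -> p.2 != [::] -> ptgt p != psrc p.

Definition is_source (x : 'I_n) : bool := [forall a : 'I_n, atgt a != x].
Definition num_sources : nat := #|[set x : 'I_n | is_source x]|.

Definition leJ (w v : rpath) : Prop :=
  exists al be : rpath, [/\ is_path al, is_path be, ptgt al = psrc w,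
    ptgt w = psrc be & v = pcat (pcat al w) be].

Definition maximal_path (w : rpath) : Prop :=
  is_path w /\ forall v, is_path v -> leJ w v -> v = w.

(* The path algebra kQ: K-valued functions on paths with finite support,
   supported on genuine paths; a path p is identified with its indicator. *)
Variable K : fieldType.

Definition in_kQ (f : rpath -> K) : Prop :=
  (exists s : seq rpath, forall p, p \notin s -> f p = 0) /\
  (forall p, f p != 0 -> is_path p).

Definition kQzero : rpath -> K := fun _ => 0.
Definition kQadd (f g : rpath -> K) : rpath -> K := fun p => f p + g p.
Definition kQscale (c : K) (f : rpath -> K) : rpath -> K := fun p => c * f p.
(* product extending bilinearly: path p * path q = pq if ptgt p = psrc q,
   and 0 otherwise *)
Definition kQmul (f g : rpath -> K) : rpath -> K := fun r =>
  if is_path r then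
    \sum_(i < (size r.2).+1)
      f (r.1, take i r.2) * g (endp r.1 (take i r.2), drop i r.2)
  else 0.

Definition kQpath (p : rpath) : rpath -> K := fun q => (q == p)%:R.

Definition is_ideal (I : (rpath -> K) -> Prop) : Prop :=
  [/\ (forall f, I f -> in_kQ f), I kQzero,
      (forall f g, I f -> I g -> I (kQadd f g)),
      (forall c f, I f -> I (kQscale c f)) &
      (forall f g, in_kQ g -> I f -> I (kQmul g f) /\ I (kQmul f g))].

Definition lin_span (X : rpath -> Prop) (f : rpath -> K) : Prop :=
  in_kQ f /\ forall p, f p != 0 -> X p.

Definition semigroup_ideal_set (X : rpath -> Prop) : Prop :=
  (forall p, X p -> is_path p) /\
  forall al w be, is_path al -> is_path w -> is_path be ->
    ptgt al = psrc w -> ptgt w = psrc be -> X w -> X (pcat (pcat al w) be).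

Definition linearized_semigroup_ideal (I : (rpath -> K) -> Prop) : Prop :=
  exists X, semigroup_ideal_set X /\ forall f, I f <-> lin_span X f.

End CycleQuiver.

(* Main.v *)
Require Import Defs.
From mathcomp Require Import all_boot all_order all_algebra.
From mathcomp Require Import zify.
From Stdlib Require Import FunctionalExtensionality Classical.
Set Implicit Arguments. Unset Strict Implicit. Unset Printing Implicit Defensive.
Import GRing.Theory.

Section Arith.
Variable n : nat.
Local Notation N := n.+1.

Definition sh (x : 'I_N) (t : nat) : 'I_N := Ordinal (ltn_pmod (x + t) (ltn0Sn n)).

Lemma val_sh x t : val (sh x t) = (x + t) %% N. Proof. by []. Qed.

Lemma sh0 x : sh x 0 = x.
Proof. by apply: val_inj; rewrite /= addn0 modn_small. Qed.

Lemma sh_sh x t u : sh (sh x t) u = sh x (t + u).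
Proof. by apply: val_inj; rewrite /= modnDml addnA. Qed.

Lemma sh_eq x a b : (sh x a == sh x b) = (a == b %[mod N]).
Proof.
apply/eqP/idP => [/(congr1 val) /= /eqP | /eqP H]; first by rewrite eqn_modDl.
by apply: val_inj => /=; apply/eqP; rewrite eqn_modDl H.
Qed.

Lemma sh_mod x a b : a = b %[mod N] -> sh x a = sh x b.
Proof. by move=> H; apply/eqP; rewrite sh_eq H. Qed.

Lemma ordS_sh x t : ordS (sh x t) = sh x t.+1.
Proof. by apply: val_inj; rewrite /= -addn1 modnDml addn1 addnS. Qed.

Lemma ord_pred_sh x t : ord_pred (sh x t) = sh x (t + n).
Proof.
by apply: val_inj; rewrite /= addnS /= modnDml addnA.
Qed.

Lemma nmul_mod a b : a + b = 0 %[mod N] -> n * a = b %[mod N].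
Proof.
move=> H; apply/eqP; rewrite -(eqn_modDr a) [b + a]addnC H.
by rewrite addnC -mulSn mulnC modnMl mod0n.
Qed.

Lemma pos_ex x z : exists2 i, i < N & z = sh x i.
Proof.
exists ((z + (N - x)) %% N); first exact: ltn_pmod.
apply: val_inj => /=; rewrite modnDmr addnA [x + z]addnC -addnA subnKC; last exact: ltnW.
by rewrite modnDr modn_small.
Qed.

Lemma sh_inj x a b : a < N -> b < N -> sh x a = sh x b -> a = b.
Proof. by move=> ha hb /eqP; rewrite sh_eq !modn_small // => /eqP. Qed.

Lemma shN x : sh x N = x.
Proof. by apply: val_inj; rewrite /= modnDr modn_small. Qed.

End Arith.

Section Paths.
Variable n : nat.
Local Notation N := n.+1.
Variable o : 'I_N -> bool.
Implicit Types x y z : 'I_N.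

Definition fwd (x : 'I_N) l := [seq sh x j | j <- iota 0 l].
Definition bwd (x : 'I_N) l := [seq sh x (n * j.+1) | j <- iota 0 l].

Lemma validp_cat x s1 s2 :
  validp o x (s1 ++ s2) = validp o x s1 && validp o (endp o x s1) s2.
Proof. by elim: s1 x => //= a s IH x; rewrite IH andbA. Qed.

Lemma endp_cat x s1 s2 : endp o x (s1 ++ s2) = endp o (endp o x s1) s2.
Proof. by elim: s1 x => //= a s IH x. Qed.

Lemma fwdS x l : fwd x l.+1 = x :: fwd (sh x 1) l.
Proof.
rewrite /fwd /= sh0 (iotaDl 1 0) -map_comp.
by congr (_ :: _); apply: eq_map => j /=; rewrite sh_sh.
Qed.

Lemma bwdS x l : bwd x l.+1 = sh x n :: bwd (sh x n) l.
Proof.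
rewrite /bwd /= muln1 (iotaDl 1 0) -map_comp.
by congr (_ :: _); apply: eq_map => j /=; rewrite sh_sh mulnS.
Qed.

Lemma path_shape x s : validp o x s ->
  [/\ s = fwd x (size s), all o s & endp o x s = sh x (size s)] \/
  [/\ s = bwd x (size s), all (fun a => ~~ o a) s & endp o x s = sh x (n * size s)].
Proof.
elim: s x => [|a s IH] x /=; first by left; rewrite sh0.
rewrite /asrc /atgt; case oa: (o a) => /andP [/eqP ax vs] /=.
  subst a; have hx1 : ordS x = sh x 1 by rewrite -[x in ordS x]sh0 ordS_sh.
  rewrite hx1 in vs *.
  case: (IH _ vs) => [[e1 e2 e3]|[e1 e2 e3]].
    by left; rewrite fwdS -e1 e2 e3 sh_sh.
  case: s {IH vs} e1 e2 e3 => [|b s] e1 e2 e3.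
    by left; rewrite /= fwdS /fwd /=.
  exfalso; move: e1 e2 => /=; rewrite bwdS => -[-> _] /= /andP [].
  by rewrite sh_sh add1n shN oa.
have ax' : a = sh x n by rewrite -(ordSK a) ax -[x in ord_pred x]sh0 ord_pred_sh.
subst a; case: (IH _ vs) => [[e1 e2 e3]|[e1 e2 e3]]; last first.
  by right; rewrite bwdS -e1 e2 e3 sh_sh mulnS.
case: s {IH vs} e1 e2 e3 => [|b s] e1 e2 e3.
  by right; rewrite /= muln1 bwdS /bwd /=.
exfalso; move: e1 e2; rewrite [size _]/= fwdS => -[-> _] /= /andP [].
by rewrite oa.
Qed.


Lemma shnN x : sh x (n * N) = x.
Proof. by rewrite (@sh_mod n x _ 0) ?sh0 // modnMl mod0n. Qed.

Lemma size_bound x s : acyclic o -> validp o x s -> size s < N.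
Proof.
move=> Hac vs; rewrite ltnNge; apply/negP => hN.
move: vs; rewrite -(cat_take_drop N s) validp_cat => /andP [vt _].
have st : size (take N s) = N by rewrite size_takel.
have := Hac (x, take N s) vt; rewrite /ptgt /psrc /=.
have ne : take N s != [::] by rewrite -size_eq0 st.
move/(_ ne); case: (path_shape vt) => [[_ _ ->]|[_ _ ->]]; rewrite st.
  by rewrite shN eqxx.
by rewrite shnN eqxx.
Qed.

Lemma bwd_inj x a b : a < N -> b < N -> sh x (n * a) = sh x (n * b) -> a = b.
Proof.
move=> ha hb /eqP; rewrite sh_eq => /eqP E.
have : n * a + (a + b) = n * b + (a + b) %[mod N] by rewrite -modnDml E modnDml.
rewrite addnA -mulSnr [a + b]addnC addnA -mulSnr mulnC [N * b]mulnC.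
by rewrite modnMDl modnMDl !modn_small // => ->.
Qed.

Lemma mem_fwd x l k : k < l -> sh x k \in fwd x l.
Proof. by move=> kl; apply: map_f; rewrite mem_iota. Qed.

Lemma mem_bwd x l k : k < l -> sh x (n * k.+1) \in bwd x l.
Proof. by move=> kl; apply: (map_f (fun j => sh x (n * j.+1))); rewrite mem_iota. Qed.

Lemma sh_bwd_pos x k : k < N -> sh x (n * (n - k).+1) = sh x k.
Proof.
move=> kN; apply: sh_mod; apply: nmul_mod.
have -> : (n - k).+1 + k = N by lia.
by rewrite modnn mod0n.
Qed.

Lemma two_mixed x l1 l2 : l1 < N -> l2 < N -> all o (fwd x l1) ->
  all (fun a => ~~ o a) (bwd x l2) -> sh x l1 = sh x (n * l2) ->
  fwd x l1 != bwd x l2 ->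
  [/\ 0 < l1, l2 = N - l1 & forall k, k < N -> o (sh x k) = (k < l1)].
Proof.
move=> h1 h2 a1 a2 /eqP; rewrite sh_eq => /eqP E ne.
have D : (l1 + l2) %% N = 0 by rewrite -modnDml E modnDml -mulSnr modnMr.
have [q Dq] : exists q, l1 + l2 = q * N by exists ((l1 + l2) %/ N); rewrite {1}(divn_eq (l1 + l2) N) D addn0.
have l1p : 0 < l1.
  case: l1 h1 a1 E ne D Dq => [|//] _ _ _ ne _ Dq; exfalso.
  case: q Dq => [|q] Dq; last by nia.
  by move: ne; rewrite add0n in Dq; rewrite Dq.
have l2p : 0 < l2.
  case: l2 h2 a2 E ne D Dq => [|//] _ _ _ ne _ Dq; exfalso.
  case: q Dq => [|q] Dq; last by nia.
  by move: ne; rewrite addn0 in Dq; rewrite Dq.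
have Hs : l1 + l2 = N.
  case: q Dq => [|[|q]] Dq; nia.
have Hl2 : l2 = N - l1 by lia.
split => // k kN; case: ltnP => kl.
  exact: (allP a1 _ (mem_fwd x kl)).
apply/negbTE; rewrite -sh_bwd_pos //; apply: (allP a2); apply: mem_bwd; lia.
Qed.


Lemma fwd_inj x a b : a < N -> b < N -> sh x a = sh x b -> a = b.
Proof. exact: sh_inj. Qed.

Lemma two_paths x s1 s2 : acyclic o -> validp o x s1 -> validp o x s2 ->
  endp o x s1 = endp o x s2 -> s1 != s2 ->
  exists m, [/\ 0 < m, m < N, (forall k, k < N -> o (sh x k) = (k < m)) &
   ((s1 = fwd x m /\ s2 = bwd x (N - m)) \/ (s1 = bwd x (N - m) /\ s2 = fwd x m))].
Proof.
move=> Hac v1 v2 E ne.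
have b1 := size_bound Hac v1; have b2 := size_bound Hac v2.
case: (path_shape v1) => [[e1 a1 n1]|[e1 a1 n1]];
case: (path_shape v2) => [[e2 a2 n2]|[e2 a2 n2]].
- exfalso; move: E; rewrite n1 n2 => /fwd_inj -/(_ b1 b2) H.
  by move: ne; rewrite e1 e2 H eqxx.
- have := @two_mixed x (size s1) (size s2) b1 b2; rewrite -e1 -e2 -n1 -n2 => /(_ a1 a2 E ne).
  case=> p1 p2 ch; exists (size s1); split => //.
  by left; rewrite -p2.
- have := @two_mixed x (size s2) (size s1) b2 b1; rewrite -e1 -e2 -n1 -n2 eq_sym => /(_ a2 a1 (esym E) ne).
  case=> p1 p2 ch; exists (size s2); split => //.
  by right; rewrite -p2.
- exfalso; move: E; rewrite n1 n2 => /bwd_inj -/(_ b1 b2) H.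
  by move: ne; rewrite e1 e2 H eqxx.
Qed.

Lemma valid_fwd x l : all o (fwd x l) -> validp o x (fwd x l).
Proof.
elim: l x => [//|l IH] x; rewrite fwdS /= /asrc /atgt => /andP [-> al].
by rewrite eqxx -[x in ordS x]sh0 ordS_sh IH.
Qed.

Lemma endp_fwd x l : all o (fwd x l) -> endp o x (fwd x l) = sh x l.
Proof.
elim: l x => [|l IH] x; first by rewrite sh0.
rewrite fwdS /= /atgt => /andP [-> al].
by rewrite -[x in ordS x]sh0 ordS_sh IH // sh_sh.
Qed.

Lemma valid_bwd x l : all (fun a => ~~ o a) (bwd x l) -> validp o x (bwd x l).
Proof.
elim: l x => [//|l IH] x; rewrite bwdS /= /asrc /atgt => /andP [/negbTE -> al].
by rewrite ordS_sh shN eqxx IH.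
Qed.

Lemma endp_bwd x l : all (fun a => ~~ o a) (bwd x l) -> endp o x (bwd x l) = sh x (n * l).
Proof.
elim: l x => [|l IH] x; first by rewrite muln0 sh0.
rewrite bwdS /= /atgt => /andP [/negbTE -> al].
by rewrite IH // sh_sh mulnS.
Qed.


Lemma last_arrow y s : s != [::] -> exists2 a, a \in s & atgt o a = endp o y s.
Proof.
elim: s y => [//|a s IH] y _ /=.
case: s IH => [|b s] IH; first by exists a; rewrite ?mem_seq1.
have [c cs ec] := IH (atgt o a) isT; exists c => //.
by rewrite in_cons cs orbT.
Qed.

Lemma infix_leJ x s i l (r : rpath N) : validp o x s ->
  r = (endp o x (take i s), take l (drop i s)) -> leJ o r (x, s).
Proof.
move=> vs ->.
exists (x, take i s), (endp o x (take (i + l) s), drop (i + l) s).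
have vs' := vs; rewrite -(cat_take_drop i s) validp_cat in vs'.
case/andP: vs' => v1 _.
have vs' := vs; rewrite -(cat_take_drop (i + l) s) validp_cat in vs'.
case/andP: vs' => _ v2.
split => //.
- by rewrite /ptgt /= takeD endp_cat.
- by rewrite /pcat /= -takeD cat_take_drop.
Qed.

End Paths.

Section Char.
Variable n : nat.
Local Notation N := n.+1.
Variable o : 'I_N -> bool.
Implicit Types y z v : 'I_N.
Variables (x : 'I_N) (m : nat).
Hypotheses (hm0 : 0 < m) (hmN : m < N)
  (ch : forall k, k < N -> o (sh x k) = (k < m)).

Definition Wp : rpath N := (x, fwd x m).
Definition Vp : rpath N := (x, bwd x (N - m)).

Lemma allW : all o (fwd x m).
Proof.
apply/allP => a /mapP [k]; rewrite mem_iota => /andP [_ km] ->.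
by rewrite ch ?km //; lia.
Qed.

Lemma o_bwd k : k < N -> o (sh x (n * k.+1)) = (N - m <= k).
Proof.
move=> kN; have -> : n * k.+1 = n * (n - (n - k)).+1 by congr (_ * _.+1); lia.
rewrite sh_bwd_pos; last by lia.
rewrite ch; last by lia.
apply/idP/idP; lia.
Qed.

Lemma allV : all (fun a => ~~ o a) (bwd x (N - m)).
Proof.
apply/allP => a /mapP [k]; rewrite mem_iota => /andP [_ km] ->.
rewrite o_bwd; lia.
Qed.

Lemma pathW : is_path o Wp. Proof. exact: valid_fwd allW. Qed.
Lemma pathV : is_path o Vp. Proof. exact: valid_bwd allV. Qed.

Lemma endW : ptgt o Wp = sh x m. Proof. exact: endp_fwd allW. Qed.
Lemma endV : ptgt o Vp = sh x m.
Proof.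
rewrite /ptgt /= endp_bwd ?allV //; apply: sh_mod; apply: nmul_mod.
by rewrite subnK ?modnn ?mod0n //; lia.
Qed.

Lemma src_x : is_source o x.
Proof.
rewrite /is_source; apply/forallP => a; rewrite /atgt; case oa: (o a).
  apply/eqP => e; move: oa; rewrite -(ordSK a) e -[x in ord_pred x]sh0 ord_pred_sh add0n ch //.
  by rewrite ltnNge -ltnS hmN.
by apply/eqP => e; move: oa; rewrite e -[x in o x]sh0 ch // hm0.
Qed.

Lemma src_uniq v : is_source o v -> v = x.
Proof.
rewrite /is_source => /forallP S; have [i iN ev] := pos_ex x v; subst v.
case: i S iN => [|i] S iN; first by rewrite sh0.
exfalso; case ov: (o (sh x i.+1)).
  have oi : o (sh x i) by rewrite ch; [move: ov; rewrite ch //; lia | lia].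
  by move: (S (sh x i)); rewrite /atgt oi ordS_sh eqxx.
by move: (S (sh x i.+1)); rewrite /atgt ov eqxx.
Qed.

Lemma nsrc : num_sources o = 1%N.
Proof.
rewrite /num_sources (_ : [set v | is_source o v] = [set x]) ?cards1 //.
apply/setP => v; rewrite !inE; apply/idP/eqP => [/src_uniq //|->]; exact: src_x.
Qed.

Lemma sink a : asrc o a != sh x m.
Proof.
rewrite /asrc; case oa: (o a); apply/eqP => e.
  by move: oa; rewrite e ch // ltnn.
move: oa; rewrite -(ordSK a) e ord_pred_sh.
have -> : sh x (m + n) = sh x m.-1.
  by apply: sh_mod; rewrite -[m in m + n](prednK hm0) addSn -addnS modnDr.
by rewrite ch; [lia | lia].
Qed.

Lemma maxW (w : rpath N) : is_path o w -> psrc w = x -> ptgt o w = sh x m ->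
  maximal_path o w.
Proof.
move=> pw sw tw; split => // v pv [al [be [pal pbe e1 e2 ev]]].
case: al pal e1 ev => a1 [|a t] pal e1 ev; last first.
  have [c _ ec] := last_arrow o a1 (isT : a :: t != [::]).
  by move: src_x => /forallP /(_ c); rewrite ec -sw -e1 eqxx.
case: be pbe e2 ev => b1 [|b t] pbe e2 ev; last first.
  move: pbe; rewrite /is_path /= => /andP [/eqP sb _].
  by move: (sink b); rewrite sb -tw e2 eqxx.
by rewrite ev /pcat /= cats0; move: e1; rewrite /ptgt /= => ->; case: w {pw tw e2 ev} sw => ? ? /= ->.
Qed.


Lemma fwd_sh i l : fwd (sh x i) l = [seq sh x k | k <- iota i l].
Proof.
have -> : iota i l = map (addn i) (iota 0 l) by rewrite -iotaDl addn0.
by rewrite /fwd -map_comp; apply: eq_map => j /=; rewrite sh_sh.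
Qed.

Lemma take_fwd i : i <= m -> take i (fwd x m) = fwd x i.
Proof. by move=> im; rewrite /fwd -map_take take_iota; congr (map _ (iota _ _)); lia. Qed.

Lemma take_bwd i : i <= N - m -> take i (bwd x (N - m)) = bwd x i.
Proof. by move=> im; rewrite /bwd -map_take take_iota; congr (map _ (iota _ _)); lia. Qed.

Lemma infix_fwd i l : i + l <= m ->
  take l (drop i (fwd x m)) = [seq sh x k | k <- iota i l].
Proof.
by move=> im; rewrite /fwd -map_drop -map_take drop_iota take_iota; congr (map _ (iota _ _)); lia.
Qed.

Lemma infix_bwd i l : i + l <= N - m ->
  take l (drop i (bwd x (N - m))) = [seq sh x (n * k.+1) | k <- iota i l].
Proof.
by move=> im; rewrite /bwd -map_drop -map_take drop_iota take_iota; congr (map _ (iota _ _)); lia.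
Qed.

Lemma all_fwd i : i <= m -> all o (fwd x i).
Proof.
move=> im; apply/allP => a /mapP [k]; rewrite mem_iota => /andP [_ km] ->.
by rewrite ch; lia.
Qed.

Lemma all_bwd i : i <= N - m -> all (fun a => ~~ o a) (bwd x i).
Proof.
move=> im; apply/allP => a /mapP [k]; rewrite mem_iota => /andP [_ km] ->.
rewrite o_bwd; lia.
Qed.

Lemma subpath (r : rpath N) : is_path o r -> leJ o r Wp \/ leJ o r Vp.
Proof.
case: r => z s; rewrite /is_path /= => vs.
have [i iN ez] := pos_ex x z; subst z.
pose i0 := (N - i) %% N.
have i0N : i0 < N by exact: ltn_pmod.
have Hi0 : sh x (n * i0) = sh x i.
  apply: sh_mod; apply: nmul_mod; rewrite modnDml subnK ?modnn ?mod0n //; exact: ltnW.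
have Hb j : sh (sh x i) (n * j) = sh x (n * (i0 + j)).
  by rewrite mulnDr -sh_sh Hi0.
case: s vs => [|a s'] vs.
  case: (leqP i m) => im.
    left; apply: (@infix_leJ n o x (fwd x m) i 0); [exact: pathW|].
    by rewrite take0 take_fwd // endp_fwd ?all_fwd.
  right; apply: (@infix_leJ n o x (bwd x (N - m)) i0 0); [exact: pathV|].
  have i0m : i0 <= N - m.
    by rewrite /i0 modn_small; lia.
  by rewrite take0 take_bwd // endp_bwd ?all_bwd // Hi0.
set l := size (a :: s').
have l0 : 0 < l by [].
case: (path_shape vs) => [[e1 a1 _]|[e1 a1 _]].
  rewrite fwd_sh in e1.
  have im : i < m.
    have : sh x i \in a :: s' by rewrite e1; apply: map_f; rewrite mem_iota; lia.
    by move/(allP a1); rewrite ch.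
  have ilm : i + l <= m.
    rewrite leqNgt; apply/negP => H.
    have : sh x m \in a :: s' by rewrite e1; apply: map_f; rewrite mem_iota; lia.
    by move/(allP a1); rewrite ch // ltnn.
  left; apply: (@infix_leJ n o x (fwd x m) i l); [exact: pathW|].
  rewrite infix_fwd // -e1 take_fwd; last by lia.
  by rewrite endp_fwd // all_fwd //; lia.
have e2 : bwd (sh x i) l = [seq sh x (n * k.+1) | k <- iota i0 l].
  have -> : iota i0 l = map (addn i0) (iota 0 l) by rewrite -iotaDl addn0.
  by rewrite /bwd -map_comp; apply: eq_map => j /=; rewrite Hb addnS.
rewrite e2 in e1.
have im : i0 < N - m.
  have : sh x (n * i0.+1) \in a :: s' by rewrite e1; apply: (map_f (fun k => sh x (n * k.+1))); rewrite mem_iota; lia.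
  by move/(allP a1); rewrite o_bwd // -ltnNge.
have ilm : i0 + l <= N - m.
  rewrite leqNgt; apply/negP => H.
  have : sh x (n * (N - m).+1) \in a :: s'.
    by rewrite e1; apply: (map_f (fun k => sh x (n * k.+1))); rewrite mem_iota; lia.
  by move/(allP a1); rewrite o_bwd ?leqnn //; lia.
right; apply: (@infix_leJ n o x (bwd x (N - m)) i0 l); [exact: pathV|].
rewrite infix_bwd // -e1 take_bwd; last by lia.
by rewrite endp_bwd ?Hi0 // all_bwd //; lia.
Qed.

Lemma WneV : Wp != Vp.
Proof.
apply/eqP => -[e].
have : x \in fwd x m by rewrite -[x in x \in _]sh0; apply: mem_fwd.
by rewrite e => /(allP allV); rewrite -[x in o x]sh0 ch // hm0.
Qed.

End Char.

Section Alg.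
Local Open Scope ring_scope.
Variable n : nat.
Local Notation N := n.+1.
Variable o : 'I_N -> bool.
Variable K : fieldType.
Implicit Types (p q r : rpath N) (f g : rpath N -> K).

Lemma in_kQ_path p : is_path o p -> in_kQ o (kQpath K p).
Proof.
move=> pp; split.
  by exists [:: p] => q; rewrite /kQpath mem_seq1; case: eqP.
move=> q; rewrite /kQpath /=; case E: (q == p); first by rewrite (eqP E).
by rewrite /= mulr0n eqxx.
Qed.

Lemma mul_paths a b : is_path o a -> is_path o b -> ptgt o a = psrc b ->
  kQmul o (kQpath K a) (kQpath K b) = kQpath K (pcat a b).
Proof.
case: a => a1 a2; case: b => b1 b2; rewrite /is_path /ptgt /psrc /= => va vb e.
apply: functional_extensionality => r; rewrite /kQmul /kQpath.
case: (eqVneq r (pcat (a1, a2) (b1, b2))) => [->|ne].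
  rewrite /pcat /is_path /= validp_cat va e vb /=.
  have hs : (size a2 < (size (a2 ++ b2)).+1)%N by rewrite size_cat ltnS leq_addr.
  rewrite (bigD1 (Ordinal hs)) //= take_size_cat // drop_size_cat //.
  rewrite e !eqxx mulr1 big1 ?addr0 // => i ne_i.
  case: eqP => [[ti]|]; last by rewrite mul0r.
  exfalso; move: ne_i; have := size_takel (ltn_ord i); rewrite ti => si.
  by apply/negP; rewrite negbK; apply/eqP; apply: val_inj.
rewrite mulr0n; case: ifP => // pr; rewrite big1 // => i _.
case: eqP => [E1|]; last by rewrite mul0r.
case: eqP => [E2|]; last by rewrite mulr0.
exfalso; move/eqP: ne; apply; case: E1 => E1a E1b; case: E2 => _ E2b.
by rewrite /pcat /= -E1a -E1b -E2b cat_take_drop; case: r {pr i E1b E2b E1a}.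
Qed.


Lemma mul_triv_r f y r : kQmul o f (kQpath K (y, [::])) r =
  if is_path o r then f r * (ptgt o r == y)%:R else 0.
Proof.
rewrite /kQmul; case: ifP => // pr.
rewrite big_ord_recr /= big1 ?add0r.
  rewrite take_size drop_size /kQpath xpair_eqE eqxx andbT.
  by case: r pr.
move=> i _; rewrite /kQpath xpair_eqE.
have : drop i r.2 != [::] by rewrite -size_eq0 size_drop subn_eq0 -ltnNge.
by move/negbTE => ->; rewrite andbF mulr0.
Qed.

Lemma mul_triv_l x g r : kQmul o (kQpath K (x, [::])) g r =
  if is_path o r then (r.1 == x)%:R * g r else 0.
Proof.
rewrite /kQmul; case: ifP => // pr.
rewrite big_ord_recl /= big1 ?addr0.
  rewrite take0 drop0 /kQpath xpair_eqE eqxx andbT.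
  by case: r pr.
move=> i _; rewrite /kQpath xpair_eqE.
have : take (bump 0 i) r.2 != [::].
  by rewrite -size_eq0 size_takel // (leq_trans _ (ltn_ord i)).
by move/negbTE => ->; rewrite andbF mul0r.
Qed.

Variable I : (rpath N -> K) -> Prop.
Hypothesis HI : is_ideal o I.

Lemma I_in_kQ f : I f -> in_kQ o f.
Proof. by move=> If; move: HI; rewrite /is_ideal => -[] H _ _ _ _; apply: H. Qed.

Lemma I_zero : I (@kQzero N K).
Proof. by move: HI; rewrite /is_ideal => -[] _ H _ _ _. Qed.

Lemma I_add f g : I f -> I g -> I (kQadd f g).
Proof. by move=> hf hg; move: HI; rewrite /is_ideal => -[] _ _ H _ _; apply: H. Qed.

Lemma I_scale c f : I f -> I (kQscale c f).
Proof. by move=> hf; move: HI; rewrite /is_ideal => -[] _ _ _ H _; apply: H. Qed.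

Lemma I_mull g f : in_kQ o g -> I f -> I (kQmul o g f).
Proof. by move=> hg hf; move: HI; rewrite /is_ideal => -[] _ _ _ _ H; case: (H f g hg hf). Qed.

Lemma I_mulr g f : in_kQ o g -> I f -> I (kQmul o f g).
Proof. by move=> hg hf; move: HI; rewrite /is_ideal => -[] _ _ _ _ H; case: (H f g hg hf). Qed.

Lemma I_ext f g : I f -> (forall r, f r = g r) -> I g.
Proof. by move=> If e; have <- : f = g by apply: functional_extensionality. Qed.

Lemma comp_in f x y : I f ->
  I (fun r => if (psrc r == x) && (ptgt o r == y) then f r else 0).
Proof.
move=> If.
have Hy : I (kQmul o f (kQpath K (y, [::]))) by apply: I_mulr => //; exact: in_kQ_path.
have := I_mull (in_kQ_path (isT : is_path o (x, [::]))) Hy.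
move/I_ext; apply => r; rewrite mul_triv_l mul_triv_r.
case: ifP => pr.
  rewrite pr /psrc; case: (r.1 == x); case: (ptgt o r == y) => /=;
  by rewrite ?mul1r ?mulr1 ?mul0r ?mulr0.
case: ifP => // _; case: (I_in_kQ If) => _ H.
by apply/eqP; apply: contraFT pr; rewrite eq_sym; exact: H.
Qed.

Lemma I_cat al w be : is_path o al -> is_path o w -> is_path o be ->
  ptgt o al = psrc w -> ptgt o w = psrc be -> I (kQpath K w) ->
  I (kQpath K (pcat (pcat al w) be)).
Proof.
move=> pa pw pb e1 e2 Iw.
have paw : is_path o (pcat al w).
  move: pa pw e1; rewrite /is_path /ptgt /psrc /= validp_cat => -> /= + ->; done.
have e3 : ptgt o (pcat al w) = psrc be.
  by rewrite -e2 /ptgt /= endp_cat; congr endp.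
rewrite -mul_paths //; apply: I_mulr; first exact: in_kQ_path.
by rewrite -mul_paths //; apply: I_mull => //; exact: in_kQ_path.
Qed.

Lemma I_leJ r w : is_path o r -> leJ o r w -> I (kQpath K r) -> I (kQpath K w).
Proof.
move=> pr [al [be [pa pb e1 e2 ->]]]; exact: I_cat.
Qed.

Lemma I_support (s : seq (rpath N)) f : (forall p, p \notin s -> f p = 0) ->
  (forall p, p \in s -> f p != 0 -> I (kQpath K p)) -> I f.
Proof.
elim: s f => [|p s IH] f H1 H2.
  by apply: (I_ext I_zero) => r; rewrite /kQzero H1.
pose f' := fun r => if r == p then 0 else f r.
have If' : I f'.
  apply: IH => q.
    by rewrite /f'; case: eqP => // /eqP qp qs; apply: H1; rewrite in_cons negb_or qp.
  move=> qs; rewrite /f'; case E: (q == p) => /=; first by rewrite eqxx.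
  by apply: H2; rewrite in_cons qs orbT.
case: (eqVneq (f p) 0) => fp.
  by apply: (I_ext If') => r; rewrite /f'; case E: (r == p) => //; rewrite (eqP E).
have Ip := H2 p (mem_head _ _) fp.
apply: (I_ext (I_add If' (I_scale (f p) Ip))) => r.
rewrite /kQadd /kQscale /f' /kQpath; case E: (r == p) => /=.
  by rewrite (eqP E) mulr1 add0r.
by rewrite mulr0 addr0.
Qed.

End Alg.

Section Main.
Variable n : nat.
Local Notation N := n.+1.
Variable o : 'I_N -> bool.
Hypothesis Hac : acyclic o.
Implicit Types (p q r t : rpath N).

Lemma char_uniq (x : 'I_N) m1 m2 : m1 <= N -> m2 <= N ->
  (forall k, k < N -> o (sh x k) = (k < m1)) ->
  (forall k, k < N -> o (sh x k) = (k < m2)) -> m1 = m2.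
Proof.
move=> h1 h2 c1 c2; case: (ltngtP m1 m2) => // H; exfalso.
  have h : m1 < N by lia.
  by move: (c2 m1 h); rewrite c1 // ltnn H.
have h : m2 < N by lia.
by move: (c1 m2 h); rewrite c2 // ltnn H.
Qed.

Lemma only_WV (x : 'I_N) m t t' : 0 < m -> m < N ->
  (forall k, k < N -> o (sh x k) = (k < m)) ->
  is_path o t -> is_path o t' -> t != t' -> psrc t = psrc t' -> ptgt o t = ptgt o t' ->
  t = Wp x m \/ t = Vp x m.
Proof.
move=> hm0 hmN ch; case: t => x1 s1; case: t' => x2 s2.
rewrite /is_path /psrc /ptgt /= => v1 v2 ne e; subst x2 => E.
have ne' : s1 != s2 by apply: contra ne => /eqP ->.
have [m1 [h0 hN c1 HH]] := two_paths Hac v1 v2 E ne'.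
have ex : x1 = x by apply: (src_uniq hm0 hmN ch); exact: (src_x h0 hN c1).
subst x1; have em : m1 = m by apply: char_uniq c1 ch; lia.
subst m1; rewrite /Wp /Vp.
by case: HH => [[-> _]|[-> _]]; [left|right].
Qed.

Local Open Scope ring_scope.
Variable K : fieldType.
Variable I : (rpath N -> K) -> Prop.
Hypothesis HI : is_ideal o I.

Definition Mcond := exists f p q, [/\ I f, is_path o p, is_path o q, p != q &
  psrc p = psrc q] /\ [/\ ptgt o p = ptgt o q, f p != 0, f q != 0 & ~ I (kQpath K p)].

Lemma A_case : ~ Mcond -> linearized_semigroup_ideal o I.
Proof.
move=> nM; exists (fun p => I (kQpath K p)); split.
  split.
    move=> p Ip; case: (I_in_kQ HI Ip) => _ H; apply: H.
    by rewrite /kQpath eqxx oner_eq0.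
  move=> al w be pa pw pb e1 e2 Iw; exact: (I_cat HI).
move=> f; split => [If|[kf Hs]].
  split; first exact: (I_in_kQ HI If).
  move=> p fp; have pp : is_path o p by case: (I_in_kQ HI If) => _ H; apply: H.
  have Ig := comp_in HI (psrc p) (ptgt o p) If.
  apply: NNPP => nIp.
  case: (classic (exists r, r != p /\ (if (psrc r == psrc p) && (ptgt o r == ptgt o p) then f r else 0) != 0)).
    move=> [r [rp gr]]; apply: nM; exists f, p, r.
    move: gr; case: ifP => [/andP [/eqP e1 /eqP e2] fr|]; last by rewrite eqxx.
    have pr : is_path o r by case: (I_in_kQ HI If) => _ H; apply: H.
    by split => //; rewrite eq_sym.
  move=> nex; apply: nIp.
  apply: (I_ext (I_scale HI (f p)^-1 Ig)) => r; rewrite /kQscale /kQpath.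
  case E: (r == p) => /=.
    by rewrite (eqP E) !eqxx /= mulVf.
  apply/eqP; rewrite mulf_eq0; apply/orP; right; apply/negPn/negP => H.
  by apply: nex; exists r; rewrite E.
case: kf => [[s Hs0] _]; apply: (I_support HI Hs0) => p _; exact: Hs.
Qed.


Lemma unique_or f t : I f -> f t != 0 ->
  (exists t', [/\ is_path o t', t' != t, psrc t' = psrc t & ptgt o t' = ptgt o t])
  \/ I (kQpath K t).
Proof.
move=> If ft; case: (classic (exists t', [/\ is_path o t', t' != t, psrc t' = psrc t & ptgt o t' = ptgt o t])) => [|nex]; [by left|right].
have Ig := comp_in HI (psrc t) (ptgt o t) If.
apply: (I_ext (I_scale HI (f t)^-1 Ig)) => r; rewrite /kQscale /kQpath.
case E: (r == t) => /=.
  by rewrite (eqP E) !eqxx /= mulVf.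
case: ifP => [/andP [/eqP e1 /eqP e2]|]; last by rewrite mulr0.
case: (eqVneq (f r) 0) => [->|fr]; first by rewrite mulr0.
exfalso; apply: nex; exists r; split => //; last by rewrite E.
by case: (I_in_kQ HI If) => _ H; apply: H.
Qed.

Lemma B_case : Mcond -> num_sources o = 1%N /\ exists (w v : rpath N) (a : K),
  [/\ maximal_path o w, maximal_path o v, w <> v, a != 0 &
   forall f, I f <-> exists c : K,
     f = kQscale c (kQadd (kQpath K w) (kQscale a (kQpath K v)))].
Proof.
case=> f [P [Q [[If pP pQ nPQ sPQ] [tPQ fP fQ nIP]]]].
have key : forall P Q : rpath N, is_path o P -> is_path o Q -> P != Q ->
    psrc P = psrc Q -> ptgt o P = ptgt o Q -> exists x m, [/\ (0 < m)%N, (m < N)%N,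
    (forall k, (k < N)%N -> o (sh x k) = (k < m)%N) &
    (P = Wp x m /\ Q = Vp x m) \/ (P = Vp x m /\ Q = Wp x m)].
  move=> [x1 s1] [x2 s2]; rewrite /is_path /psrc /ptgt /= => v1 v2 ne e; subst x2 => E.
  have ne' : s1 != s2 by apply: contra ne => /eqP ->.
  have [m [h0 hN c HH]] := two_paths Hac v1 v2 E ne'.
  by exists x1, m; split => //; rewrite /Wp /Vp; case: HH => [[-> ->]|[-> ->]]; [left|right].
have [x [m [hm0 hmN ch PQ]]] := key P Q pP pQ nPQ sPQ tPQ.
move: PQ; set W := Wp x m; set V := Vp x m => PQ.
have pW := pathW hm0 hmN ch; have pV := pathV hm0 hmN ch.
have tW := endW hm0 hmN ch; have tV := endV hm0 hmN ch.
have WV := WneV hm0 hmN ch.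
have WVf : (W == V) = false by apply/negbTE.
have sW : psrc W = x by []. have sV : psrc V = x by [].
pose y := sh x m.
pose g := fun r => if (psrc r == x) && (ptgt o r == y) then f r else 0.
have Ig : I g := comp_in HI x y If.
have gW : g W = f W by rewrite /g sW tW !eqxx.
have gV : g V = f V by rewrite /g sV tV !eqxx.
have fW : f W != 0 by case: PQ => [[<- _]|[_ <-]].
have fV : f V != 0 by case: PQ => [[_ <-]|[<- _]].
have gsupp : forall t, t != W -> t != V -> g t = 0.
  move=> t tW' tV'; rewrite /g; case: ifP => // /andP [/eqP st /eqP tt].
  apply/eqP; apply: contraT => ft.
  have pt : is_path o t by case: (I_in_kQ HI If) => _ H; apply: H.
  have := only_WV hm0 hmN ch pt pW tW'; rewrite sW tW => /(_ st tt).
  by case=> e; [move: tW'|move: tV']; rewrite e eqxx.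
have I_WV : I (kQpath K W) -> I (kQpath K V).
  move=> IW; have Ik := I_add HI Ig (I_scale HI (- f W) IW).
  apply: (I_ext (I_scale HI (f V)^-1 Ik)) => r; rewrite /kQscale /kQadd /kQpath.
  case E1: (r == W) => /=.
    by rewrite (eqP E1) gW WVf mulr1 addrN mulr0.
  case E2: (r == V) => /=.
    by rewrite (eqP E2) gV mulr0 addr0 mulVf.
  by rewrite gsupp ?E1 ?E2 // mulr0 addr0 mulr0.
have I_VW : I (kQpath K V) -> I (kQpath K W).
  move=> IV; have Ik := I_add HI Ig (I_scale HI (- f V) IV).
  apply: (I_ext (I_scale HI (f W)^-1 Ik)) => r; rewrite /kQscale /kQadd /kQpath.
  case E2: (r == V) => /=.
    by rewrite (eqP E2) gV [V == W]eq_sym WVf mulr1 addrN mulr0.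
  case E1: (r == W) => /=.
    by rewrite (eqP E1) gW mulr0 addr0 mulVf.
  by rewrite gsupp ?E1 ?E2 // mulr0 addr0 mulr0.
have nW : ~ I (kQpath K W).
  by move=> IW; apply: nIP; case: PQ => [[-> _]|[-> _]] //; exact: I_WV.
have nV : ~ I (kQpath K V).
  by move=> IV; apply: nIP; case: PQ => [[-> _]|[-> _]] //; exact: I_VW.
pose a := f V / f W.
have a0 : a != 0 by rewrite mulf_neq0 // invr_neq0.
pose h := kQadd (kQpath K W) (kQscale a (kQpath K V)).
have Ih : I h.
  apply: (I_ext (I_scale HI (f W)^-1 Ig)) => r; rewrite /h /kQscale /kQadd /kQpath.
  case E1: (r == W) => /=.
    by rewrite (eqP E1) gW WVf mulVf // mulr0 addr0.
  case E2: (r == V) => /=.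
    by rewrite (eqP E2) gV /a add0r mulr1 mulrC.
  by rewrite gsupp ?E1 ?E2 // mulr0 mulr0 addr0.
split; first exact: nsrc hm0 hmN ch.
exists W, V, a; split => //.
- exact: maxW hm0 hmN ch _ pW sW tW.
- exact: maxW hm0 hmN ch _ pV sV tV.
- by apply/eqP.
move=> f'; split; last by move=> [c ->]; exact: (I_scale HI c Ih).
move=> If'.
have Z : forall t, t != W -> t != V -> f' t = 0.
  move=> t tW' tV'; apply/eqP; apply: contraT => ft.
  have pt : is_path o t by case: (I_in_kQ HI If') => _ H; apply: H.
  case: (unique_or If' ft) => [[t' [pt' nt st tt]]|It].
    have nt' : t != t' by rewrite eq_sym.
    have := only_WV hm0 hmN ch pt pt' nt' (esym st) (esym tt).
    by case=> e; [move: tW'|move: tV']; rewrite e eqxx.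
  exfalso; case: (subpath hm0 hmN ch pt) => L; [apply: nW|apply: nV]; apply: (I_leJ HI pt L It).
have fV' : f' V = f' W * a.
  apply/eqP; rewrite -subr_eq0; apply/eqP; apply: NNPP => nz.
  apply: nV; have Ik := I_add HI If' (I_scale HI (- f' W) Ih).
  apply: (I_ext (I_scale HI (f' V - f' W * a)^-1 Ik)) => r.
  rewrite /h /kQscale /kQadd /kQpath.
  case E1: (r == W) => /=.
    by rewrite (eqP E1) WVf mulr0 addr0 mulr1 addrN mulr0.
  case E2: (r == V) => /=.
    by rewrite (eqP E2) add0r mulr1 mulNr mulVf //; apply/eqP.
  by rewrite (Z r) ?E1 ?E2 // mulr0 addr0 mulr0 addr0 mulr0.
exists (f' W); apply: functional_extensionality => r.
rewrite /kQscale /kQadd /kQpath.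
case E1: (r == W) => /=.
  by rewrite (eqP E1) WVf mulr0 addr0 mulr1.
case E2: (r == V) => /=.
  by rewrite (eqP E2) add0r mulr1.
by rewrite Z ?E1 ?E2 // mulr0 addr0 mulr0.
Qed.


Lemma not_both : linearized_semigroup_ideal o I ->
  (exists (w v : rpath N) (a : K),
  [/\ maximal_path o w, maximal_path o v, w <> v, a != 0 &
   forall f, I f <-> exists c : K,
     f = kQscale c (kQadd (kQpath K w) (kQscale a (kQpath K v)))]) -> False.
Proof.
move=> [X [[HX1 HX2] HXI]] [w [v [a [mw mv nwv a0 Hf]]]].
have wv : (w == v) = false by apply/negbTE/eqP.
pose h := kQadd (kQpath K w) (kQscale a (kQpath K v)).
have Ih : I h.
  by apply/Hf; exists 1; apply: functional_extensionality => r; rewrite /kQscale mul1r.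
have pw : is_path o w by case: mw.
have Iw : I (kQpath K w).
  apply/HXI; split; first exact: in_kQ_path.
  move=> p; rewrite /kQpath; case E: (p == w) => /=; last by rewrite eqxx.
  move=> _; rewrite (eqP E); have [_ H] := proj1 (HXI h) Ih; apply: H.
  by rewrite /h /kQadd /kQscale /kQpath eqxx wv mulr0 addr0 oner_eq0.
have [c Ec] := proj1 (Hf _) Iw.
have := congr1 (fun F => F v) Ec; have := congr1 (fun F => F w) Ec.
rewrite /kQscale /kQadd /kQpath /= !eqxx wv [v == w]eq_sym wv /=.
rewrite mulr0 addr0 mulr1 => <-; rewrite add0r mulr1 mul1r => /esym /eqP.
by rewrite (negbTE a0).
Qed.

End Main.

Unset Implicit Arguments.
Local Open Scope ring_scope.

Theorem proposition6 (K : closedFieldType) (n : nat) (o : 'I_n -> bool)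
  (Hacyc : acyclic o) (Hsrc : exists x : 'I_n, is_source o x)
  (I : (rpath n -> K) -> Prop) (HI : is_ideal o I) :
  let A := linearized_semigroup_ideal o I in
  let B := num_sources o = 1%N /\
    exists (w v : rpath n) (a : K),
      [/\ maximal_path o w, maximal_path o v, w <> v, a != 0 &
        forall f, I f <->
          exists c : K, f = kQscale c (kQadd (kQpath K w) (kQscale a (kQpath K v)))] in
  (A \/ B) /\ ~ (A /\ B).
Proof.
move: o Hacyc Hsrc I HI; case: n => [|n] o Hacyc Hsrc I HI.
  by case: Hsrc => -[].
move=> A B; rewrite /A /B.
split.
  case: (classic (Mcond o I)) => hM.
    by right; exact: B_case.
  by left; exact: A_case.
by move=> [hA hB]; exact: not_both hA hB.2.
Qed.
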